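(* Let $\langle E,\rightarrow\rangle$ be a computation, $b$ a regular predicate, and $C$ a non-trivial consistent cut of $\langle E,\rightarrow\rangle$. Then $C$ satisfies $\neg b$ if and only if there exist events $e,f$ such that there is no path from $e$ to $f$ in $\langle E,\rightarrow\rangle$, there is a path from $e$ to $f$ in the slice of $\langle E,\rightarrow\rangle$ with respect to $b$, and $C$ satisfies $\mathrm{prevents}(f,e)$ (i.e., $f\in C$ and $e\notin C$).
   Context: A computation is a directed graph $\langle E, \rightarrow\rangle$ whose vertices (events) are partitioned among processes, each with an initial and a final event, whose path relation contains Lamport's happened-before relation, with all initial (resp. final) events in one strongly connected component. A vertex subset $C$ is a consistent cut if for every edge $(u,v)$, $v\in C$ implies $u\in C$; $\emptyset$ and $E$ are trivial. A predicate is evaluated on non-trivial consistent cuts and is regular if whenever consistent cuts $C_1,C_2$ satisfy it, so do $C_1\cap C_2$ and $C_1\cup C_2$. The slice with respect to $b$ is a directed graph on $E$ whose consistent cuts include every consistent cut of the computation satisfying $b$ and which has the fewest consistent cuts among all such graphs. *)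

(* Defs.v *)
From mathcomp Require Import all_boot.

Set Implicit Arguments. Unset Strict Implicit. Unset Printing Implicit Defensive.

Section Defs.
Variable E : finType.

Definition reach (g : rel E) (x y : E) : bool := [exists z, g x z && connect g z y].

Definition consistent_cut (g : rel E) (C : {set E}) : Prop :=
  forall u v, g u v -> v \in C -> u \in C.

Definition nontrivial_cut (g : rel E) (C : {set E}) : Prop :=
  consistent_cut g C /\ C != set0 /\ C != setT.

(* A computation <E, g>: events partitioned among processes (proc), each process
   totally ordered by the process order [pord] with initial event [init p] and
   final event [final p]; messages [msg]; Lamport's happened-before is the
   transitive closure of process order and messages; the path relation of g
   contains happened-before; all initial (resp. final) events lie in one
   strongly connected component of g. *)
Definition is_computation (P : finType) (proc : E -> P) (pord msg : rel E)
    (init final : P -> E) (g : rel E) : Prop :=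
  (forall x, ~~ pord x x) /\
      (forall x y z, pord x y -> pord y z -> pord x z) /\
      (forall x y, pord x y -> proc x = proc y) /\
      (forall x y, proc x = proc y -> x != y -> pord x y || pord y x) /\
      (forall p, proc (init p) = p /\ proc (final p) = p) /\
      (forall p e, proc e = p -> e != init p -> pord (init p) e) /\
      (forall p e, proc e = p -> e != final p -> pord e (final p)) /\
      (forall x y, reach (fun u v => pord u v || msg u v) x y -> reach g x y) /\
      (forall p q, connect g (init p) (init q) /\ connect g (final p) (final q)).

Definition regular (g : rel E) (b : {set E} -> bool) : Prop :=
  forall C1 C2, nontrivial_cut g C1 -> nontrivial_cut g C2 -> b C1 -> b C2 ->
    b (C1 :&: C2) /\ b (C1 :|: C2).

Definition cuts_of (g : rel E) : {set {set E}} :=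
  [set C : {set E} | [forall u, forall v, g u v ==> (v \in C) ==> (u \in C)]].

Definition is_slice (g : rel E) (b : {set E} -> bool) (S : rel E) : Prop :=
  (forall C, nontrivial_cut g C -> b C -> consistent_cut S C) /\
  (forall S' : rel E, (forall C, nontrivial_cut g C -> b C -> consistent_cut S' C) ->
     #|cuts_of S| <= #|cuts_of S'|).

End Defs.

(* Main.v *)
Require Import Defs.
From mathcomp Require Import all_boot.

Set Implicit Arguments. Unset Strict Implicit. Unset Printing Implicit Defensive.

Section Aux.
Variable E : finType.

Lemma cutsP (g : rel E) (C : {set E}) : reflect (consistent_cut g C) (C \in cuts_of g).
Proof.
rewrite inE; apply: (iffP forallP) => H.
- move=> u v guv vC; move/forallP: (H u) => /(_ v); by rewrite guv vC.
- move=> u; apply/forallP => v; apply/implyP => guv; apply/implyP; exact: H.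
Qed.

Lemma cut_connect (g : rel E) (C : {set E}) z v :
  consistent_cut g C -> connect g z v -> v \in C -> z \in C.
Proof.
move=> cc /connectP [p pth ->]; elim: p z pth => [|a p IH] z //= /andP [gza pth] H.
exact: (cc _ _ gza (IH _ pth H)).
Qed.

Lemma cut_reach (g : rel E) (C : {set E}) z v :
  consistent_cut g C -> reach g z v -> v \in C -> z \in C.
Proof.
move=> cc /existsP [w /andP [gzw cw]] vC.
exact: (cc _ _ gzw (cut_connect cc cw vC)).
Qed.

Variables (g : rel E) (b : {set E} -> bool) (S : rel E).
Hypothesis reg : regular g b.
Hypothesis sl1 : forall C, nontrivial_cut g C -> b C -> consistent_cut S C.

Definition Lb (D : {set E}) : bool :=
  [&& D \in cuts_of g, D != set0, D != setT & b D].

Lemma LbP D : Lb D -> nontrivial_cut g D /\ b D.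
Proof. by case/and4P => /cutsP ? ? ? ?. Qed.

Definition Sp : rel E := fun u v => [forall D, Lb D ==> (v \in D) ==> (u \in D)].

Definition Dv (v : E) : {set E} := \bigcap_(D | Lb D && (v \in D)) D.

Lemma Dv_in v : v \in Dv v.
Proof. by apply/bigcapP => D /andP []. Qed.

Lemma Dv_sub (X : {set E}) v : consistent_cut Sp X -> v \in X -> Dv v \subset X.
Proof.
move=> cc vX; apply/subsetP => u /bigcapP uD; apply: (cc u v) vX.
apply/forallP => D; apply/implyP => LD; apply/implyP => vD; apply: uD.
by rewrite LD vD.
Qed.

Lemma Dv_S v : consistent_cut S (Dv v).
Proof.
move=> u w Suw /bigcapP wD; apply/bigcapP => D PD.
case/andP: (PD) => /LbP [nt bD] _.
exact: (sl1 nt bD Suw (wD _ PD)).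
Qed.

Lemma Dv_cases v : (Dv v == setT) || (Lb (Dv v) && (v \in Dv v)).
Proof.
rewrite /Dv; apply: (big_ind (fun X => (X == setT) || (Lb X && (v \in X)))).
- by rewrite eqxx.
- move=> X Y /orP [/eqP -> | /andP [LX vX]].
    by rewrite setTI.
  move=> /orP [/eqP -> | /andP [LY vY]].
    by rewrite setIT LX vX orbT.
  apply/orP; right; rewrite inE vX vY andbT.
  case/LbP: (LX) => [[ccX [X0 XT]] bX]; case/LbP: (LY) => [[ccY [Y0 YT]] bY].
  have [bI _] := reg (conj ccX (conj X0 XT)) (conj ccY (conj Y0 YT)) bX bY.
  rewrite /Lb andbT; apply/and4P; split => //.
  + apply/cutsP => u w guw /setIP [wX wY]; apply/setIP; split.
      exact: ccX guw wX.
    exact: ccY guw wY.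
  + by apply/set0Pn; exists v; rewrite inE vX vY.
  + apply: contra XT => /eqP IT.
    by rewrite eqEsubset subsetT /= -IT subsetIl.
- by move=> D /andP [LD vD]; rewrite LD vD orbT.
Qed.

Lemma Sp_cuts_sub : cuts_of Sp \subset cuts_of S.
Proof.
apply/subsetP => X /cutsP ccX; apply/cutsP => u w Suw wX.
have uD := Dv_S Suw (Dv_in w).
exact: (subsetP (Dv_sub ccX wX)).
Qed.

Lemma Sp_cut_Lb (C : {set E}) : consistent_cut Sp C -> C != set0 -> C != setT -> Lb C.
Proof.
move=> cc C0 CT.
have EC : C = \bigcup_(v in C) Dv v.
  apply/setP => x; apply/idP/bigcupP.
    by move=> xC; exists x => //; exact: Dv_in.
  by case=> v vC xD; exact: (subsetP (Dv_sub cc vC)).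
have : (\bigcup_(v in C) Dv v == set0) || (\bigcup_(v in C) Dv v == setT)
        || Lb (\bigcup_(v in C) Dv v).
  apply: (big_ind (fun Y => (Y == set0) || (Y == setT) || Lb Y)).
  - by rewrite eqxx.
  - move=> X Y /orP [/orP [/eqP -> | /eqP ->] | LX].
    + by rewrite set0U.
    + by rewrite setTU eqxx orbT.
    move=> /orP [/orP [/eqP -> | /eqP ->] | LY].
    + by rewrite setU0 LX !orbT.
    + by rewrite setUT eqxx orbT.
    case: (boolP (X :|: Y == setT)) => [_ | UT]; first by rewrite orbT.
    rewrite orbF; apply/orP; right.
    case/LbP: (LX) => [[ccX [X0 XT]] bX]; case/LbP: (LY) => [[ccY [Y0 YT]] bY].
    have [_ bU] := reg (conj ccX (conj X0 XT)) (conj ccY (conj Y0 YT)) bX bY.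
    rewrite /Lb; apply/and4P; split => //.
    + apply/cutsP => u w guw /setUP [wX | wY]; apply/setUP.
        by left; exact: ccX guw wX.
      by right; exact: ccY guw wY.
    + case/set0Pn: X0 => x xX; apply/set0Pn; exists x; by rewrite inE xX.
  - move=> v _; by case/orP: (Dv_cases v) => [-> | /andP [-> _]]; rewrite ?orbT.
by rewrite -EC (negbTE C0) (negbTE CT).
Qed.

End Aux.

Theorem theorem16 (E P : finType) (proc : E -> P) (pord msg : rel E)
    (init final : P -> E) (g : rel E) (b : {set E} -> bool) (S : rel E)
    (C : {set E}) :
  is_computation proc pord msg init final g ->
  regular g b ->
  is_slice g b S ->
  nontrivial_cut g C ->
  (~~ b C <->
   exists e f : E, ~~ reach g e f /\ reach S e f /\ f \in C /\ e \notin C).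
Proof.
move=> _ reg [sl1 sl2] ntC; split; last first.
  move=> [e [f [_ [rS [fC eC]]]]]; apply/negP => bC.
  by move: eC; rewrite (cut_reach (sl1 _ ntC bC) rS fC).
move=> nbC.
case: (boolP (C \in cuts_of S)) => [CS | ]; last first.
  rewrite inE => /forallPn [u /forallPn [v]]; rewrite !negb_imply => /and3P [Suv vC uC].
  exists u, v; split; last split => //.
    apply/negP => rg; move: uC; case: ntC => ccC _.
    by rewrite (cut_reach ccC rg vC).
  by apply/existsP; exists v; rewrite Suv connect0.
exfalso.
have h1 : forall D, nontrivial_cut g D -> b D -> consistent_cut (Sp g b) D.
  move=> D [ccD [D0 DT]] bD u v /forallP /(_ D) /implyP H vD.
  apply: (implyP (H _)) vD; apply/and4P; split => //; exact/cutsP.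
have := sl2 _ h1; apply/negP; rewrite -ltnNge; apply: proper_card.
rewrite properE (Sp_cuts_sub sl1) /=; apply/subsetPn; exists C => //.
apply/negP => /cutsP ccC.
case: ntC => _ [C0 CT].
have := Sp_cut_Lb reg ccC C0 CT; by case/and4P => _ _ _; rewrite (negbTE nbC).
Qed.
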